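(* Let $G$ be a finite, simple, connected graph of order at least three. If $\{u,v\}$ is a weak total metric basis of $G$ (i.e. a WTR-set of minimum cardinality, and this cardinality is $2$), then $u$ and $v$ are not adjacent.
   Context: $d(x,y)$ is the shortest-path distance. A set $W\subseteq V(G)$ is a resolving set if for every two distinct vertices $y,z$ of $G$ there is $x\in W$ with $d(y,x)\ne d(z,x)$. A set $W$ is a weak total resolving set (WTR-set) if $W$ is a resolving set and, for every $w\in W$ and every $x\in V(G)\setminus W$, there is $w'\in W\setminus\{w\}$ with $d(x,w')\ne d(w,w')$. A weak total metric basis is a WTR-set of minimum cardinality; this minimum is $\dim_{wt}(G)$. *)

(* Defs.v *)
From mathcomp Require Import all_boot.
Set Implicit Arguments. Unset Strict Implicit. Unset Printing Implicit Defensive.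

Definition simple_graph (T : finType) (e : rel T) : Prop :=
  symmetric e /\ irreflexive e.

Definition connected_graph (T : finType) (e : rel T) : Prop :=
  forall x y : T, connect e x y.

Fixpoint within (T : finType) (e : rel T) (n : nat) (x y : T) : bool :=
  if n is n'.+1 then (x == y) || [exists z, e x z && within e n' z y]
  else x == y.

(* shortest-path distance: the least n with a walk of length <= n from x to y.
   For a connected graph this is < #|T|, so searching 0..#|T|-1 suffices. *)
Definition dist (T : finType) (e : rel T) (x y : T) : nat :=
  find (fun n => within e n x y) (iota 0 #|T|).

Definition resolving (T : finType) (e : rel T) (W : {set T}) : Prop :=
  forall y z : T, y != z -> exists2 x, x \in W & dist e y x != dist e z x.

Definition wtr_set (T : finType) (e : rel T) (W : {set T}) : Prop :=
  resolving e W /\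
  forall w x, w \in W -> x \notin W ->
    exists2 w', w' \in W :\ w & dist e x w' != dist e w w'.

Definition wt_metric_basis (T : finType) (e : rel T) (W : {set T}) : Prop :=
  wtr_set e W /\ forall W' : {set T}, wtr_set e W' -> #|W| <= #|W'|.

(* Main.v *)
Require Import Defs.
From mathcomp Require Import all_boot.

Lemma dist1 (T : finType) (e : rel T) (a b : T) :
  2 <= #|T| -> a != b -> e a b -> dist e a b = 1.
Proof.
move=> H2 nab eab; rewrite /dist.
have -> : #|T| = (#|T| - 2).+2 by rewrite -[in LHS](subnK H2) addn2.
rewrite /= (negbTE nab) /=.
have -> : [exists z, e a z && (z == b)] by apply/existsP; exists b; rewrite eab eqxx.
by [].
Qed.

Lemma path_cross (T : finType) (e : rel T) (W : {set T}) (p : seq T) (x : T) :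
  x \notin W -> path e x p -> last x p \in W ->
  exists y z, [/\ y \notin W, z \in W & e y z].
Proof.
elim: p x => [|a p IH] x /= xW; first by rewrite (negbTE xW).
case/andP=> exa pa la.
case: (boolP (a \in W)) => aW; first by exists x, a.
exact: IH aW pa la.
Qed.

Theorem proposition3 (T : finType) (e : rel T) (u v : T) :
  simple_graph e -> connected_graph e -> 3 <= #|T| ->
  u != v -> wt_metric_basis e [set u; v] -> ~~ e u v.
Proof.
move=> [sym irr] conn H3 nuv [[_ wtr] _].
apply/negP=> euv.
set W := [set u; v].
have H2 : 2 <= #|T| by apply: ltnW.
have : 0 < #|~: W|.
  have hW : #|W| <= 2 by rewrite cards2; case: (u != v).
  have := cardsC W; move=> hC; rewrite -(ltn_add2l #|W|) addn0 hC.
  exact: leq_ltn_trans hW H3.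
rewrite card_gt0 => /set0Pn [x]; rewrite in_setC => xW.
have /connectP [p pp lp] := conn x u.
have uW : u \in W by rewrite !inE eqxx.
have [y [z [yW zW eyz]]] := @path_cross T e W p x xW pp (ltac:(by rewrite -lp)).
have yz : y != z by apply: contraNneq yW => ->.
have yu : y != u by apply: contraNneq yW => ->.
have yv : y != v by apply: contraNneq yW => ->; rewrite !inE eqxx orbT.
move: zW; rewrite !inE => /orP [] /eqP zE; subst z.
- have vW : v \in W by rewrite !inE eqxx orbT.
  have [w' ] := wtr v y vW yW.
  rewrite !inE => /andP [w'v /orP [] /eqP w'E]; last by rewrite w'E eqxx in w'v.
  subst w'.
  rewrite (@dist1 T e _ _ H2 yu eyz) (@dist1 T e _ _ H2 _ _) //; first by rewrite eq_sym.
  by rewrite sym.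
- have [w' ] := wtr u y uW yW.
  rewrite !inE => /andP [w'u /orP [] /eqP w'E]; first by rewrite w'E eqxx in w'u.
  subst w'.
  by rewrite (@dist1 T e _ _ H2 yv eyz) (@dist1 T e _ _ H2 nuv euv).
Qed.
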